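(* Let $F$, $H$, $X$, $\Omega$, $Q$ and the sequences $(x_k),(w_k),(w'_k),(y_k)$ be as described in the context (generated by the IneIREG method). Suppose the regularization parameters are $\eta_k=\eta_0/(k+1)^b$ for all $k\ge 0$, with $0<\eta_0\le 1$ and $0<b<1$. Suppose also that $\alpha_0\in[0,1]$ and the sequence $(\alpha_k/\eta_k)_{k\ge0}$ is nonincreasing; that $\lambda_k\in[\underline\lambda,\overline\lambda]$ for all $k\ge0$, where $0<\underline\lambda\le\overline\lambda\le 1/(L_F+\eta_0L_H)$; and that $s:=\sum_{k=0}^\infty \delta_k\eta_k^{-1}<+\infty$. For $k\ge1$ let $\Lambda_k=\sum_{j=0}^{k-1}\lambda_j$ and $\overline y_k=\Lambda_k^{-1}\sum_{j=0}^{k-1}\lambda_j y_j$. Then: (a) for all $k\ge1$, $$-B_H\,\mathrm{dist}(\overline y_k,Q)\le \mathrm{Gap}(\overline y_k,H,Q)\le \frac{1}{k^{1-b}}\Big(\frac{D_X^2}{2^{1-b}\underline\lambda\,\eta_0}\Big)+\frac1k\Big(\frac{s}{2\underline\lambda}\Big);$$ (b) for all $k\ge1$, $$0\le \mathrm{Gap}(\overline y_k,F,X)\le \frac1k\Big(\frac{D_X^2}{2\underline\lambda}\Big)+\frac1k\Big(\frac{s}{2\underline\lambda}\Big)+\frac{1}{k^b}\Big(\frac{\eta_0\overline\lambda C_HD_X}{(1-b)\underline\lambda}\Big);$$ (c) if $Q$ is $\sigma$-weakly sharp of order $\mathcal M\ge1$, then for all $k\ge1$, $$\mathrm{Gap}(\overline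 y_k,H,Q)\ge -\frac{B_H}{\sigma^{1/\mathcal M}}\Bigg(\frac1k\Big(\frac{D_X^2}{2\underline\lambda}\Big)+\frac1k\Big(\frac{s}{2\underline\lambda}\Big)+\frac{1}{k^b}\Big(\frac{\eta_0\overline\lambda C_HD_X}{(1-b)\underline\lambda}\Big)\Bigg)^{1/\mathcal M}.$$
   Context: Work in $\mathbb{R}^n$ with Euclidean inner product $\langle\cdot,\cdot\rangle$ and norm $\|\cdot\|$. The maps $F\colon \mathrm{Dom}\,F\to\mathbb{R}^n$ and $H\colon\mathrm{Dom}\,H\to\mathbb{R}^n$ are monotone and Lipschitz continuous with constants $L_F>0$ and $L_H>0$. $X$ is a nonempty compact convex set and $\Omega$ a nonempty closed convex set with $X\subset\Omega\subset\mathrm{Dom}\,F\cap\mathrm{Dom}\,H$; $P_X,P_\Omega$ denote orthogonal projections. $Q:=\{x\in X:\langle F(x),y-x\rangle\ge0\ \forall y\in X\}$ (solution set of VIP$(F,X)$) is assumed nonempty. $D_X:=\sup_{x,y\in X}\|x-y\|$, $C_H:=\sup_{x\in X}\|H(x)\|$, $B_H:=\sup_{x\in Q}\|H(x)\|$, and $\mathrm{dist}(y,Q)$ is the Euclidean distance from $y$ to $Q$. Dual gap functions: $\mathrm{Gap}(z,H,Q):=\sup_{x\in Q}\langle H(x),z-x\rangle$ and $\mathrm{Gap}(z,F,X):=\sup_{x\in X}\langle F(x),z-x\rangle$. $Q$ is $\sigma$-weakly sharp of order $\mathcal M\ge1$ ($\sigma>0$) if $\langle F(x),y-x\rangle\ge\sigma\,\mathrm{dist}(y,Q)^{\mathcal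 M}$ for all $x\in Q$, $y\in X$. IneIREG method: start with $x_0=x_{-1}\in X$; for $k=0,1,\dots$, with parameters $\alpha_k\ge0$, $\lambda_k>0$, $\eta_k>0$, set $w_k=x_k+\alpha_k(x_k-x_{k-1})$, $w'_k=P_\Omega(w_k)$, $y_k=P_X\big(w_k-\lambda_k(F(w'_k)+\eta_kH(w'_k))\big)$, $x_{k+1}=P_X\big(w_k-\lambda_k(F(y_k)+\eta_kH(y_k))\big)$. Also $\delta_k:=\alpha_k(1+\alpha_k)\|x_k-x_{k-1}\|^2$ for $k\ge0$. *)

(* Defs.v *)
From HB Require Import structures.
From mathcomp Require Import all_boot all_order all_algebra.
From mathcomp Require Import all_classical all_reals all_analysis.
Set Implicit Arguments. Unset Strict Implicit. Unset Printing Implicit Defensive.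
Import Order.TTheory GRing.Theory Num.Theory.
Import numFieldNormedType.Exports.
Local Open Scope classical_set_scope.
Local Open Scope ring_scope.

Section Defs.
Variables (R : realType) (n : nat).
Notation vec := 'rV[R]_n.

Definition dotp (u v : vec) : R := \sum_(i < n) u ord0 i * v ord0 i.
Definition enorm (u : vec) : R := Num.sqrt (dotp u u).

Definition is_projection (A : set vec) (p : vec -> vec) : Prop :=
  forall x, A (p x) /\ forall y, A y -> enorm (x - p x) <= enorm (x - y).

Definition monotone_map_on (D : set vec) (G : vec -> vec) : Prop :=
  forall x y, D x -> D y -> 0 <= dotp (G x - G y) (x - y).

Definition lipschitz_map_on (D : set vec) (G : vec -> vec) (L : R) : Prop :=
  forall x y, D x -> D y -> enorm (G x - G y) <= L * enorm (x - y).

Definition VIsol (G : vec -> vec) (A : set vec) : set vec :=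
  [set x | A x /\ forall y, A y -> 0 <= dotp (G x) (y - x)].

Definition diam (A : set vec) : R := sup [set enorm (p.1 - p.2) | p in A `*` A].
Definition supnorm (G : vec -> vec) (A : set vec) : R := sup [set enorm (G x) | x in A].
Definition distS (y : vec) (A : set vec) : R := inf [set enorm (y - q) | q in A].
Definition Gap (z : vec) (G : vec -> vec) (A : set vec) : R :=
  sup [set dotp (G x) (z - x) | x in A].

Definition weakly_sharp (G : vec -> vec) (A : set vec) (sigma M : R) : Prop :=
  forall x y, VIsol G A x -> A y -> sigma * (distS y (VIsol G A)) `^ M <= dotp (G x) (y - x).

(* IneIREG auxiliary sequences; x_{-1} = x_0 is encoded via k.-1 *)
Definition ineW (x : nat -> vec) (alpha : nat -> R) (k : nat) : vec :=
  x k + alpha k *: (x k - x k.-1).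
Definition ineDelta (x : nat -> vec) (alpha : nat -> R) (k : nat) : R :=
  alpha k * (1 + alpha k) * enorm (x k - x k.-1) ^+ 2.
Definition Lam (lambda : nat -> R) (k : nat) : R := \sum_(j < k) lambda j.
Definition ybar (lambda : nat -> R) (y : nat -> vec) (k : nat) : vec :=
  (Lam lambda k)^-1 *: \sum_(j < k) lambda j *: y j.
End Defs.

(* Main.v *)
Require Import Defs.
From HB Require Import structures.
From mathcomp Require Import all_boot all_order all_algebra.
From mathcomp Require Import all_classical all_reals all_analysis.
From mathcomp Require Import ring lra zify.
Import Order.TTheory GRing.Theory Num.Theory.
Import numFieldNormedType.Exports.
Local Open Scope classical_set_scope.
Local Open Scope ring_scope.
Set Implicit Arguments. Unset Strict Implicit. Unset Printing Implicit Defensive.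
Section Basics.
Variables (R : realType) (n : nat).
Notation vec := 'rV[R]_n.
Implicit Types u v w : vec.

Lemma dotpC u v : dotp u v = dotp v u.
Proof. by apply: eq_bigr => i _; rewrite mulrC. Qed.

Lemma dotpDl u v w : dotp (u + v) w = dotp u w + dotp v w.
Proof. by rewrite /dotp -big_split; apply: eq_bigr => i _; rewrite mxE mulrDl. Qed.

Lemma dotpZl (a : R) u v : dotp (a *: u) v = a * dotp u v.
Proof. by rewrite /dotp mulr_sumr; apply: eq_bigr => i _; rewrite mxE mulrA. Qed.

Lemma dotpNl u v : dotp (- u) v = - dotp u v.
Proof. by rewrite -scaleN1r dotpZl mulN1r. Qed.

Lemma dotpDr u v w : dotp w (u + v) = dotp w u + dotp w v.
Proof. by rewrite dotpC dotpDl !(dotpC w). Qed.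

Lemma dotpZr (a : R) u v : dotp v (a *: u) = a * dotp v u.
Proof. by rewrite dotpC dotpZl dotpC. Qed.

Lemma dotpNr u v : dotp v (- u) = - dotp v u.
Proof. by rewrite dotpC dotpNl dotpC. Qed.

Lemma dotp0r u : dotp u 0 = 0.
Proof. by rewrite /dotp big1 // => i _; rewrite mxE mulr0. Qed.

Lemma dotp_sumr u k (f : nat -> vec) :
  dotp u (\sum_(j < k) f j) = \sum_(j < k) dotp u (f j).
Proof.
elim: k => [|k IH]; first by rewrite !big_ord0 dotp0r.
by rewrite !big_ord_recr /= dotpDr IH.
Qed.

Lemma dotpp_ge0 u : 0 <= dotp u u.
Proof. by apply: sumr_ge0 => i _; rewrite -expr2 sqr_ge0. Qed.

Lemma enorm_ge0 u : 0 <= enorm u.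
Proof. exact: sqrtr_ge0. Qed.

Lemma enorm_sq u : enorm u ^+ 2 = dotp u u.
Proof. by rewrite sqr_sqrtr // dotpp_ge0. Qed.

Lemma dotp_eq0 u : dotp u u = 0 -> u = 0.
Proof.
move=> h; have h2 : forall i, u ord0 i * u ord0 i = 0.
  by move=> i; apply: (psumr_eq0P _ h) => // j _; rewrite -expr2 sqr_ge0.
apply/rowP => i; rewrite mxE; apply/eqP; rewrite -sqrf_eq0 expr2; apply/eqP; exact: h2.
Qed.

Lemma dotp0l u : dotp 0 u = 0.
Proof. by rewrite dotpC dotp0r. Qed.

Lemma cauchy_schwarz u v : dotp u v <= enorm u * enorm v.
Proof.
have [a0|a0] := eqVneq (enorm u) 0.
  have : dotp u u = 0 by rewrite -enorm_sq a0 expr0n.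
  by move/dotp_eq0 => ->; rewrite dotp0l mulr_ge0 // enorm_ge0.
have [b0|b0] := eqVneq (enorm v) 0.
  have : dotp v v = 0 by rewrite -enorm_sq b0 expr0n.
  by move/dotp_eq0 => ->; rewrite dotp0r mulr_ge0 // enorm_ge0.
have ha : 0 < enorm u by rewrite lt_neqAle eq_sym a0 enorm_ge0.
have hb : 0 < enorm v by rewrite lt_neqAle eq_sym b0 enorm_ge0.
have := dotpp_ge0 (enorm v *: u - enorm u *: v).
rewrite !(dotpDl, dotpDr, dotpNl, dotpNr, dotpZl, dotpZr) (dotpC v u) -!enorm_sq.
move=> h.
have hab : 0 < enorm u * enorm v by rewrite mulr_gt0.
set a := enorm u in h hab *; set b := enorm v in h hab *; set d := dotp u v in h *.
have : (a * b) * d <= (a * b) * (a * b) by nra.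
by rewrite ler_pM2l.
Qed.

Lemma abs_dotp u v : `|dotp u v| <= enorm u * enorm v.
Proof.
rewrite ler_norml cauchy_schwarz andbT lerNl -dotpNr.
have -> : enorm v = enorm (- v) by rewrite /enorm dotpNl dotpNr opprK.
exact: cauchy_schwarz.
Qed.

Lemma enorm_le_sq u v : enorm u <= enorm v -> dotp u u <= dotp v v.
Proof.
move=> h; rewrite -!enorm_sq; rewrite expr2 [X in _ <= X]expr2.
by apply: ler_pM => //; apply: enorm_ge0.
Qed.

Lemma sq_le_enorm u (c : R) : 0 <= c -> dotp u u <= c ^+ 2 -> enorm u <= c.
Proof.
move=> c0 h; rewrite /enorm -(ger0_norm c0) -sqrtr_sqr.
by rewrite ler_sqrt // sqr_ge0.
Qed.

End Basics.
Section Proj.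
Variables (R : realType) (n : nat).
Notation vec := 'rV[R]_n.
Implicit Types u v w : vec.

Ltac dexp := rewrite ?(dotpDl, dotpDr, dotpNl, dotpNr, dotpZl, dotpZr).

Lemma proj_vi (A : set vec) P z q : convex_set A -> is_projection A P -> A q ->
  dotp (z - P z) (q - P z) <= 0.
Proof.
move=> cA hP Aq; have [Ap hmin] := hP z.
set p := P z in Ap hmin *.
have key : forall t : R, 0 < t -> t < 1 ->
    2 * dotp (z - p) (q - p) <= t * dotp (q - p) (q - p).
  move=> t t0 t1.
  have t01 : (0 <= t <= 1) by rewrite !ltW.
  pose tt : {i01 R} := Itv01 (ltW t0) (ltW t1).
  have hc := cA (q : convex_lmodType vec) (p : convex_lmodType vec) tt.
  have : A (t *: q + (1 - t) *: p).
    have := hc (mem_set Aq) (mem_set Ap). by rewrite in_setE.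
  move/hmin/enorm_le_sq.
  have -> : z - (t *: q + (1 - t) *: p) = (z - p) - t *: (q - p).
    by apply/rowP => i; rewrite !mxE; ring.
  move: (z - p) (q - p) => d e.
  dexp; rewrite ?(dotpC e d) => h1.
  have h2 : t * (2 * dotp d e - t * dotp e e) <= 0 by lra.
  have : 2 * dotp d e - t * dotp e e <= 0 by rewrite -(pmulr_rle0 _ t0).
  lra.
set a := dotp (z - p) (q - p); set c := dotp (q - p) (q - p).
have c0 : 0 <= c by apply: dotpp_ge0.
rewrite leNgt; apply/negP => a0.
have cpa : 0 < c + 2 * a by lra.
have h1 : 0 < a / (c + 2 * a) by rewrite divr_gt0.
have h2 : a / (c + 2 * a) < 1 by rewrite ltr_pdivrMr // mul1r; lra.
have := key _ h1 h2.
rewrite mulrAC ler_pdivlMr // -/a -/c.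
nra.
Qed.

Lemma proj_nonexp_to (A : set vec) P z q : convex_set A -> is_projection A P -> A q ->
  enorm (P z - q) <= enorm (z - q).
Proof.
move=> cA hP Aq; have h := proj_vi z cA hP Aq.
apply: sq_le_enorm; first exact: enorm_ge0.
rewrite enorm_sq.
have -> : z - q = (z - P z) - (q - P z) by apply/rowP => i; rewrite !mxE; ring.
have -> : P z - q = - (q - P z) by apply/rowP => i; rewrite !mxE; ring.
move: h; move: (z - P z) (q - P z) => d e h.
dexp; rewrite ?(dotpC e d); have := dotpp_ge0 d; lra.
Qed.

End Proj.
Ltac dexp := rewrite ?(dotpDl, dotpDr, dotpNl, dotpNr, dotpZl, dotpZr).
Ltac sym2 u v := rewrite ?(dotpC v u).

Section Step.
Variables (R : realType) (n : nat).
Notation vec := 'rV[R]_n.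
Implicit Types u v w : vec.

Lemma eg_step (X Om : set vec) PX PO (T : vec -> vec) (L lam : R) z xs yv a :
  convex_set X -> is_projection X PX -> convex_set Om -> is_projection Om PO ->
  X `<=` Om ->
  (forall u v, Om u -> Om v -> enorm (T u - T v) <= L * enorm (u - v)) ->
  0 <= L -> 0 < lam -> lam * L <= 1 -> X xs ->
  yv = PX (z - lam *: T (PO z)) -> a = PX (z - lam *: T yv) ->
  dotp (a - xs) (a - xs) <= dotp (z - xs) (z - xs) - 2 * lam * dotp (T yv) (yv - xs).
Proof.
move=> cX hPX cO hPO XO Lip L0 lam0 lamL Xxs ey ea.
have Xa : X a by rewrite ea; case: (hPX (z - lam *: T yv)).
have Xy : X yv by rewrite ey; case: (hPX (z - lam *: T (PO z))).
have hA := proj_vi (z - lam *: T yv) cX hPX Xxs; rewrite -ea in hA.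
have hB := proj_vi (z - lam *: T (PO z)) cX hPX Xa; rewrite -ey in hB.
have OPz : Om (PO z) by case: (hPO z).
have hL1 := Lip _ _ OPz (XO _ Xy).
have hL2 := proj_nonexp_to z cO hPO (XO _ Xy).
have hCS := cauchy_schwarz (T (PO z) - T yv) (a - yv).
have hF : 2 * lam * dotp (T (PO z) - T yv) (a - yv) <=
    dotp (z - yv) (z - yv) + dotp (a - yv) (a - yv).
  rewrite -!enorm_sq.
  have e1 := enorm_ge0 (z - yv); have e2 := enorm_ge0 (a - yv).
  have e3 := enorm_ge0 (T (PO z) - T yv).
  have e4 : enorm (T (PO z) - T yv) <= L * enorm (z - yv).
    apply: (le_trans hL1); apply: ler_wpM2l => //.
  set A := enorm (z - yv) in e1 e4 *; set B := enorm (a - yv) in e2 hCS *.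
  set G := enorm (T (PO z) - T yv) in e3 e4 hCS *.
  have h1 : G * B <= L * A * B by rewrite ler_wpM2r.
  have h2 : lam * (G * B) <= lam * (L * A * B) by rewrite ler_wpM2l // ltW.
  have h3 : 0 <= (1 - lam * L) * (A * B) by rewrite mulr_ge0 // ?subr_ge0 // mulr_ge0.
  have h4 : 0 <= (A - B) ^+ 2 by rewrite sqr_ge0.
  have h5 : dotp (T (PO z) - T yv) (a - yv) <= G * B by [].
  have h6 : lam * dotp (T (PO z) - T yv) (a - yv) <= lam * (G * B) by rewrite ler_wpM2l // ltW.
  rewrite expr2 [B ^+ 2]expr2; rewrite expr2 in h4.
  nra.
move: hA hB hF; move: (T (PO z)) (T yv) => g0 g1.
clear -lam0.
dexp.
sym2 z xs; sym2 z a; sym2 z yv; sym2 z g0; sym2 z g1;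
sym2 xs a; sym2 xs yv; sym2 xs g0; sym2 xs g1;
sym2 a yv; sym2 a g0; sym2 a g1; sym2 yv g0; sym2 yv g1; sym2 g0 g1.
move=> hA hB hF; lra.
Qed.
End Step.
Section Scalar.
Variables (R : realType) (n : nat).
Notation vec := 'rV[R]_n.

Lemma inertial_id (xk xkm xs : vec) (al : R) :
  dotp (xk + al *: (xk - xkm) - xs) (xk + al *: (xk - xkm) - xs) =
  (1 + al) * dotp (xk - xs) (xk - xs) - al * dotp (xkm - xs) (xkm - xs)
  + al * (1 + al) * dotp (xk - xkm) (xk - xkm).
Proof. dexp; sym2 xk xkm; sym2 xk xs; sym2 xkm xs; ring. Qed.

Lemma telesc (phi r al : nat -> R) (D2 : R) k :
  (forall j, 0 <= phi j <= D2) -> (forall j, 0 < r j) -> (forall j, r j <= r j.+1) ->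
  (forall j, 0 <= al j) -> al 0%N <= 1 -> (forall j, al j.+1 * r j.+1 <= al j * r j) ->
  \sum_(j < k) r j * ((1 + al j) * phi j - al j * phi j.-1 - phi j.+1)
   <= (r k.-1 - al k * r k) * D2 + al k * r k * phi k.-1 - r k.-1 * phi k.
Proof.
move=> hphi hr hrinc hal al01 har.
elim: k => [|k IH].
  rewrite big_ord0 /=.
  have := hphi 0%N; have := hr 0%N; have := hal 0%N => h1 h2 /andP[h3 h4].
  have : 0 <= r 0%N * (1 - al 0%N) * (D2 - phi 0%N).
    apply: mulr_ge0; [apply: mulr_ge0|]; rewrite ?subr_ge0 //; exact: ltW.
  lra.
rewrite big_ord_recr /=.
have hpk : r k.-1 <= r k by case: k {IH} => // k.
set c := r k + al k * r k - r k.-1 - al k.+1 * r k.+1.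
have c0 : 0 <= c.
  have := har k; have := hal k; have := hr k => *; rewrite /c; lra.
have := hphi k => /andP[h1 h2].
have : 0 <= c * (D2 - phi k) by apply: mulr_ge0; rewrite // subr_ge0.
rewrite /c => h3.
lra.
Qed.

Lemma telesc2 (phi r al : nat -> R) (D2 : R) k :
  (forall j, 0 <= phi j <= D2) -> (forall j, 0 < r j) -> (forall j, r j <= r j.+1) ->
  (forall j, 0 <= al j) -> al 0%N <= 1 -> (forall j, al j.+1 * r j.+1 <= al j * r j) ->
  \sum_(j < k) r j * ((1 + al j) * phi j - al j * phi j.-1 - phi j.+1) <= r k.-1 * D2.
Proof.
move=> hphi hr hrinc hal al01 har.
apply: (le_trans (telesc k hphi hr hrinc hal al01 har)).
have := hphi k.-1 => /andP[h1 h2]; have := hphi k => /andP[h3 h4].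
have h5 : 0 <= al k * r k by apply: mulr_ge0 => //; apply: ltW.
have h6 : al k * r k * phi k.-1 <= al k * r k * D2 by rewrite ler_wpM2l.
have h7 : 0 <= r k.-1 * phi k by apply: mulr_ge0 => //; apply: ltW.
lra.
Qed.

End Scalar.
Section Pow.
Variable R : realType.

Lemma bern (u r : R) : 0 <= u -> 0 < r < 1 -> u `^ r <= r * u + (1 - r).
Proof.
move=> u0 /andP[r0 r1].
have r0' : 0 < r^-1 by rewrite invr_gt0.
have r1' : 0 < (1 - r)^-1 by rewrite invr_gt0 subr_gt0.
have h := @conjugate_powR R (u `^ r) 1 (r^-1) ((1 - r)^-1) (powR_ge0 _ _) ler01 r0' r1'.
rewrite !invrK mulr1 powR1 -powRrM mulfV ?gt_eqF // powRr1 // in h.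
have : u `^ r <= u * r + 1 * (1 - r).
  by apply: h; rewrite addrC subrK.
lra.
Qed.

End Pow.
Section Pow2.
Variable R : realType.

Lemma term_bound (j : nat) (b : R) : 0 < b < 1 ->
  (j.+1%:R `^ b)^-1 <= ((j.+1%:R : R) `^ (1 - b) - (j%:R : R) `^ (1 - b)) / (1 - b).
Proof.
move=> /andP[b0 b1].
set m : R := j.+1%:R; set r := 1 - b.
have m0 : 0 < m by rewrite /m ltr0Sn.
have r0 : 0 < r by rewrite /r subr_gt0.
have r1 : r < 1 by rewrite /r ltrBlDr ltrDl.
set u := j%:R / m.
have u0 : 0 <= u by rewrite divr_ge0 // ltW.
have ju : (j%:R : R) = u * m by rewrite /u divfK // gt_eqF.
have hmb : m `^ r * m `^ b = m.
  rewrite -powRD; last by rewrite (gt_eqF m0) implybT.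
  by rewrite /r subrK powRr1 // ltW.
have mr0 : 0 < m `^ r by rewrite powR_gt0.
have mb0 : 0 < m `^ b by rewrite powR_gt0.
have hb := bern u0 (introT andP (conj r0 r1)) .
rewrite ju (powRM _ u0 (ltW m0)).
have hjm : (j%:R : R) = m - 1 by rewrite /m -natr1 addrK.
rewrite ler_pdivlMr //.
have e : (m `^ b)^-1 = m `^ r / m.
  by rewrite -[X in _ / X]hmb; field; rewrite !gt_eqF.
rewrite e.
have : u `^ r * m `^ r <= (r * u + (1 - r)) * m `^ r by rewrite ler_wpM2r // ltW.
have : m `^ r / m * r = r * (m `^ r) * (1 - u).
  have -> : 1 - u = m^-1 by rewrite /u hjm; field; rewrite gt_eqF.
  by field; rewrite gt_eqF.
move=> -> h; nra.
Qed.
End Pow2.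
Section Pow3.
Variable R : realType.
Lemma sum_pow_bound (k : nat) (b : R) : 0 < b < 1 ->
  \sum_(j < k) (j.+1%:R `^ b)^-1 <= (k%:R : R) `^ (1 - b) / (1 - b).
Proof.
move=> hb.
apply: le_trans; first by apply: ler_sum => j _; exact: (term_bound (nat_of_ord j) hb).
rewrite -mulr_suml.
have -> : \sum_(j < k) ((j.+1%:R : R) `^ (1 - b) - (j%:R : R) `^ (1 - b)) =
   (k%:R : R) `^ (1 - b) - (0%:R : R) `^ (1 - b).
  by rewrite -(big_mkord xpredT (fun j => (j.+1%:R : R) `^ (1 - b) - (j%:R : R) `^ (1 - b)))
       (telescope_sumr (fun j => (j%:R : R) `^ (1 - b))).
rewrite powR0 ?subr0 //.
case/andP: hb => _ b1; rewrite gt_eqF // subr_gt0 //.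
Qed.
End Pow3.
Section Helpers.
Variables (R : realType) (n : nat).
Notation vec := 'rV[R]_n.
Implicit Types u v w : vec.

Lemma entry_le_norm v i : `|v ord0 i| <= `|v|.
Proof.
change (`|v ord0 i| <= mx_norm v); rewrite mx_normrE.
exact: (le_bigmax _ (fun ij : 'I_1 * 'I_n => `|v ij.1 ij.2|) (ord0, i)).
Qed.

Lemma enorm_le_mx v : enorm v <= n%:R * `|v|.
Proof.
apply: sq_le_enorm; first by apply: mulr_ge0.
apply: (@le_trans _ _ (\sum_(i < n) `|v| * `|v|)).
  apply: ler_sum => i _.
  apply: (le_trans (ler_norm _)); rewrite normrM.
  by apply: ler_pM => //; apply: entry_le_norm.
rewrite sumr_const card_ord -mulr_natl.
have hn : (n%:R : R) <= n%:R * n%:R by rewrite -natrM ler_nat; nia.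
have h0 : 0 <= `|v| * `|v| by apply: mulr_ge0.
rewrite expr2; nra.
Qed.

Lemma enorm_N v : enorm (- v) = enorm v.
Proof. by rewrite /enorm dotpNl dotpNr opprK. Qed.

Lemma enorm_Z (a : R) v : enorm (a *: v) = `|a| * enorm v.
Proof.
rewrite /enorm dotpZl dotpZr mulrA sqrtrM; last by rewrite -expr2 sqr_ge0.
by rewrite sqrtr_sqr.
Qed.

Lemma enorm_add u v : enorm (u + v) <= enorm u + enorm v.
Proof.
apply: sq_le_enorm; first by rewrite addr_ge0 // enorm_ge0.
dexp; rewrite (dotpC v u).
have := cauchy_schwarz u v; rewrite -(enorm_sq u) -(enorm_sq v) => h.
rewrite sqrrD; lra.
Qed.

Lemma enorm_sub u v : enorm (u - v) <= enorm u + enorm v.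
Proof. by rewrite -(enorm_N v); apply: enorm_add. Qed.

Lemma bounded_enorm (A : set vec) : compact A -> exists M, 0 <= M /\ forall v, A v -> enorm v <= M.
Proof.
move=> /compact_bounded /ex_strict_bound_gt0 [M M0 hM].
exists (n%:R * M); split; first by apply: mulr_ge0 => //; apply: ltW.
move=> v Av; apply: (le_trans (enorm_le_mx v)); apply: ler_wpM2l => //.
by apply: ltW; apply: hM.
Qed.

End Helpers.

Section SupH.
Variable R : realType.
Lemma sup_ge_elt (S : set R) a B : S a -> (forall y, S y -> y <= B) -> a <= sup S.
Proof. move=> Sa hB; have hs : has_ubound S by exists B. exact: (ub_le_sup hs). Qed.
Lemma sup_le_B (S : set R) B : S !=set0 -> (forall y, S y -> y <= B) -> sup S <= B.
Proof. by move=> S0 hB; apply: ge_sup. Qed.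
Lemma inf_ge_B (S : set R) B : S !=set0 -> (forall y, S y -> B <= y) -> B <= inf S.
Proof. by move=> S0 hB; apply: lb_le_inf. Qed.
End SupH.
Section Ybar.
Variables (R : realType) (n : nat).
Notation vec := 'rV[R]_n.
Variables (lambda : nat -> R) (y : nat -> vec).
Hypothesis lam0 : forall j, 0 < lambda j.

Lemma Lam_ge0 k : 0 <= Lam lambda k.
Proof. by apply: sumr_ge0 => j _; apply: ltW. Qed.

Lemma Lam_S k : Lam lambda k.+1 = Lam lambda k + lambda k.
Proof. by rewrite /Lam big_ord_recr. Qed.

Lemma Lam_pos k : (1 <= k)%N -> 0 < Lam lambda k.
Proof.
case: k => // k _; rewrite Lam_S; apply: ltr_wpDl; [exact: Lam_ge0|exact: lam0].
Qed.

Lemma Lam_ge (lo : R) k : (forall j, lo <= lambda j) -> k%:R * lo <= Lam lambda k.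
Proof.
move=> h; elim: k => [|k IH]; first by rewrite mul0r /Lam big_ord0.
by rewrite Lam_S -natr1 mulrDl mul1r lerD.
Qed.

Lemma dot_ybar (g xs : vec) k : (1 <= k)%N ->
  dotp g (ybar lambda y k - xs) =
  (Lam lambda k)^-1 * \sum_(j < k) lambda j * dotp g (y j - xs).
Proof.
move=> k1; have L0 := Lam_pos k1.
have -> : ybar lambda y k - xs = (Lam lambda k)^-1 *: \sum_(j < k) lambda j *: (y j - xs).
  rewrite /ybar.
  have -> : \sum_(j < k) lambda j *: (y j - xs) =
      \sum_(j < k) lambda j *: y j - Lam lambda k *: xs.
    rewrite /Lam scaler_suml -sumrB; apply: eq_bigr => j _; by rewrite scalerBr.
  by rewrite scalerBr scalerA mulVf ?gt_eqF // scale1r.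
rewrite dotpZr (dotp_sumr g k (fun j => lambda j *: (y j - xs))); congr (_ * _); apply: eq_bigr => j _; by rewrite dotpZr.
Qed.

Local Open Scope convex_scope.
Lemma ybar_in (X : set vec) k : convex_set X -> (forall j, X (y j)) -> (1 <= k)%N ->
  X (ybar lambda y k).
Proof.
move=> cX Xy; case: k => // k _; elim: k => [|k IH].
  by rewrite /ybar /Lam !big_ord1 scalerA mulVf ?gt_eqF // scale1r.
have L0 : 0 < Lam lambda k.+1 by apply: Lam_pos.
have L1 : 0 < Lam lambda k.+2 by apply: Lam_pos.
set t := lambda k.+1 / Lam lambda k.+2.
have t0 : 0 <= t by rewrite divr_ge0 // ltW.
have t1 : t <= 1 by rewrite ler_pdivrMr // mul1r Lam_S lerDr ltW.
pose tt : {i01 R} := Itv01 t0 t1.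
have := cX (y k.+1 : convex_lmodType vec) (ybar lambda y k.+1 : convex_lmodType vec) tt
  (mem_set (Xy _)) (mem_set IH).
rewrite in_setE.
have -> : (y k.+1 : convex_lmodType vec) <| tt |> (ybar lambda y k.+1 : convex_lmodType vec)
   = t *: y k.+1 + (1 - t) *: ybar lambda y k.+1 by [].
have -> : ybar lambda y k.+2 = t *: y k.+1 + (1 - t) *: ybar lambda y k.+1; last by [].
rewrite /ybar [in LHS]big_ord_recr /= -/(Lam lambda k.+2).
move: (\sum_(i < k.+1) lambda i *: y i) => S.
have e : Lam lambda k.+2 = Lam lambda k.+1 + lambda k.+1 by rewrite Lam_S.
rewrite /t e in L1 *.
apply/rowP => i; rewrite !mxE.
field.
by rewrite !gt_eqF.
Qed.
End Ybar.
Section Ser.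
Variable R : realType.
Lemma psum_le_lim (u : nat -> R) s : (forall j, 0 <= u j) ->
  series u @ \oo --> s -> forall k, \sum_(j < k) u j <= s.
Proof.
move=> u0 h k.
have nd : nondecreasing_seq (series u).
  move=> a b ab; rewrite /series /=; exact: (nondecreasing_series (fun m _ _ => u0 m)).
have := nondecreasing_cvgn_le nd (cvgP _ h) k.
rewrite (cvg_lim _ h) // /series /= big_mkord //.
Qed.
End Ser.
Section Final.
Variable R : realType.

Lemma final_a (K P Qb c2 Lm lo eta0 N1 s : R) :
  0 < K -> 0 < P -> 0 < Qb -> P * Qb = K -> 0 < c2 -> c2 <= 2 ->
  0 < lo -> K * lo <= Lm -> 0 < eta0 -> 0 <= N1 -> 0 <= s ->
  Lm^-1 * ((Qb / eta0 * N1 + s) / 2) <= P^-1 * (N1 / (c2 * lo * eta0)) + K^-1 * (s / (2 * lo)).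
Proof.
move=> K0 P0 Q0 PQ c0 c2le lo0 Llo e0 N0 s0.
have Kl0 : 0 < K * lo by apply: mulr_gt0.
have Lm0 : 0 < Lm by apply: lt_le_trans Llo.
have h0 : 0 <= (Qb / eta0 * N1 + s) / 2.
  by apply: divr_ge0 => //; apply: addr_ge0 => //; apply: mulr_ge0 => //; apply: divr_ge0 => //; apply: ltW.
apply: (@le_trans _ _ ((K * lo)^-1 * ((Qb / eta0 * N1 + s) / 2))).
  by apply: ler_wpM2r => //; rewrite lef_pV2.
have -> : (K * lo)^-1 * ((Qb / eta0 * N1 + s) / 2) =
   P^-1 * (N1 / (2 * lo * eta0)) + K^-1 * (s / (2 * lo)).
  rewrite -PQ; field; rewrite !gt_eqF //.
apply: lerD => //; apply: ler_wpM2l; first by rewrite invr_ge0 ltW.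
apply: ler_wpM2l => //.
rewrite lef_pV2 ?posrE ?mulr_gt0 //.
rewrite -!mulrA; apply: ler_wpM2r => //; apply: mulr_ge0; exact: ltW.
Qed.

Lemma final_b (K P Qb Lm lo b eta0 N1 s W : R) :
  0 < K -> 0 < P -> 0 < Qb -> P * Qb = K -> b < 1 ->
  0 < lo -> K * lo <= Lm -> 0 <= N1 -> 0 <= s -> 0 <= W -> 0 <= eta0 ->
  Lm^-1 * ((N1 + s + 2 * W * (eta0 * P / (1 - b))) / 2) <=
  K^-1 * (N1 / (2 * lo)) + K^-1 * (s / (2 * lo)) + Qb^-1 * (eta0 * W / ((1 - b) * lo)).
Proof.
move=> K0 P0 Q0 PQ b1 lo0 Llo N0 s0 W0 e0.
have Kl0 : 0 < K * lo by apply: mulr_gt0.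
have Lm0 : 0 < Lm by apply: lt_le_trans Llo.
have b0 : 0 < 1 - b by rewrite subr_gt0.
have h0 : 0 <= (N1 + s + 2 * W * (eta0 * P / (1 - b))) / 2.
  apply: divr_ge0 => //; apply: addr_ge0; first exact: addr_ge0.
  apply: mulr_ge0; first by apply: mulr_ge0.
  by apply: divr_ge0; [apply: mulr_ge0 => //; apply: ltW|apply: ltW].
apply: (@le_trans _ _ ((K * lo)^-1 * ((N1 + s + 2 * W * (eta0 * P / (1 - b))) / 2))).
  by apply: ler_wpM2r => //; rewrite lef_pV2.
rewrite le_eqVlt; apply/orP; left; apply/eqP.
rewrite -PQ; field; rewrite !gt_eqF //.
Qed.
End Final.
Unset Implicit Arguments.

Theorem theorem3p8 (R : realType) (n : nat)
  (F H : 'rV[R]_n -> 'rV[R]_n) (DomF DomH X Omega : set 'rV[R]_n) (LF LH : R)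
  (PX POmega : 'rV[R]_n -> 'rV[R]_n)
  (alpha lambda eta : nat -> R) (eta0 b lam_lo lam_hi s : R)
  (x y : nat -> 'rV[R]_n) :
  0 < LF -> 0 < LH ->
  monotone_map_on DomF F -> lipschitz_map_on DomF F LF ->
  monotone_map_on DomH H -> lipschitz_map_on DomH H LH ->
  X !=set0 -> compact X -> convex_set X ->
  Omega !=set0 -> closed Omega -> convex_set Omega ->
  X `<=` Omega -> Omega `<=` DomF `&` DomH ->
  is_projection X PX -> is_projection Omega POmega ->
  VIsol F X !=set0 ->
  (* IneIREG iteration *)
  X (x 0) ->
  (forall k, 0 <= alpha k) -> (forall k, 0 < lambda k) ->
  (forall k, y k = PX (ineW x alpha k -
       lambda k *: (F (POmega (ineW x alpha k)) + eta k *: H (POmega (ineW x alpha k))))) ->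
  (forall k, x k.+1 = PX (ineW x alpha k - lambda k *: (F (y k) + eta k *: H (y k)))) ->
  (* parameter assumptions *)
  0 < eta0 -> eta0 <= 1 -> 0 < b -> b < 1 ->
  (forall k, eta k = eta0 / (k.+1%:R `^ b)) ->
  0 <= alpha 0 <= 1 ->
  (forall k, alpha k.+1 / eta k.+1 <= alpha k / eta k) ->
  0 < lam_lo -> lam_lo <= lam_hi -> lam_hi <= 1 / (LF + eta0 * LH) ->
  (forall k, lam_lo <= lambda k <= lam_hi) ->
  series (fun k => ineDelta x alpha k / eta k) @ \oo --> s ->
  let Q := VIsol F X in
  let DX := diam X in
  let CH := supnorm H X in
  let BH := supnorm H Q in
  let Fbound (k : nat) :=
    k%:R^-1 * (DX ^+ 2 / (2 * lam_lo)) + k%:R^-1 * (s / (2 * lam_lo))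
    + (k%:R `^ b)^-1 * (eta0 * lam_hi * CH * DX / ((1 - b) * lam_lo)) in
  (* (a) *)
  (forall k : nat, (1 <= k)%N ->
     - BH * distS (ybar lambda y k) Q <= Gap (ybar lambda y k) H Q /\
     Gap (ybar lambda y k) H Q <=
       (k%:R `^ (1 - b))^-1 * (DX ^+ 2 / (2 `^ (1 - b) * lam_lo * eta0))
       + k%:R^-1 * (s / (2 * lam_lo))) /\
  (* (b) *)
  (forall k : nat, (1 <= k)%N ->
     0 <= Gap (ybar lambda y k) F X /\ Gap (ybar lambda y k) F X <= Fbound k) /\
  (* (c) *)
  (forall sigma M : R, 0 < sigma -> 1 <= M -> weakly_sharp F X sigma M ->
     forall k : nat, (1 <= k)%N ->
       - (BH / sigma `^ (1 / M)) * (Fbound k) `^ (1 / M) <= Gap (ybar lambda y k) H Q).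
Proof.
move=> LF0 LH0 monF lipF monH lipH X0 cX convX O0 clO convO XO OD hPX hPO Q0 Xx0
  al0 lam0 ey ex eta0p eta01 b0 b1 eeta al01 alrat lo0 lolh lhi lamb ser
  Q DX CH BH Fbound.
have Xx : forall j, X (x j).
  by case=> [|j] //; rewrite ex; case: (hPX (ineW x alpha j - lambda j *: (F (y j) + eta j *: H (y j)))).
have Xy : forall j, X (y j).
  by move=> j; rewrite ey; case: (hPX (ineW x alpha j -
       lambda j *: (F (POmega (ineW x alpha j)) + eta j *: H (POmega (ineW x alpha j))))).
have QX : forall q, Q q -> X q by move=> q [].
set pw := fun j : nat => (j.+1%:R : R) `^ b.
have pw1 : forall j, 1 <= pw j.
  move=> j; have h1 : (1 : R) <= j.+1%:R by rewrite ler1n.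
  have := ler_powR h1 (ltW b0); rewrite powRr0; exact.
have pw0 : forall j, 0 < pw j by move=> j; apply: lt_le_trans (pw1 j).
have pwS : forall j, pw j <= pw j.+1.
  move=> j; rewrite /pw; apply: ge0_ler_powR; rewrite ?nnegrE ?ler_nat //; exact: ltW.
have eta_e : forall j, eta j = eta0 / pw j by move=> j; rewrite eeta.
have eta_pos : forall j, 0 < eta j by move=> j; rewrite eta_e divr_gt0.
have eta_le0 : forall j, eta j <= eta0.
  by move=> j; rewrite eta_e ler_pdivrMr // ler_peMr // ltW.
have eta_le1 : forall j, eta j <= 1 by move=> j; apply: le_trans (eta_le0 j) eta01.
have etaS : forall j, eta j.+1 <= eta j.
  by move=> j; rewrite !eta_e ler_pM2l // lef_pV2 ?posrE.
have alS : forall j, alpha j.+1 <= alpha j.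
  move=> j; have := alrat j; have := etaS j; have := eta_pos j; have := eta_pos j.+1.
  have := al0 j; have := al0 j.+1 => a1 a0 e1 e0 ee.
  rewrite ler_pdivrMr // mulrAC ler_pdivlMr //.
  move=> h; rewrite -(ler_pM2r e0); apply: le_trans h _.
  by rewrite ler_wpM2l.
have [MX [MX0 hMX]] := bounded_enorm cX.
have hD : forall u v, X u -> X v -> enorm (u - v) <= DX.
  move=> u v Xu Xv; apply: (@sup_ge_elt _ _ _ (MX + MX)).
    by exists (u, v).
  move=> _ [[p1 p2] [/= Xp1 Xp2] <-] /=.
  by apply: (le_trans (enorm_sub _ _)); apply: lerD; apply: hMX.
have DX0 : 0 <= DX by apply: le_trans (hD _ _ (Xx 0%N) (Xx 0%N)); apply: enorm_ge0.
have hDsq : forall u v, X u -> X v -> dotp (u - v) (u - v) <= DX ^+ 2.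
  move=> u v Xu Xv; rewrite -enorm_sq expr2 [DX ^+ 2]expr2.
  by apply: ler_pM; rewrite ?enorm_ge0 ?hD.
have OX : forall u, X u -> DomF u /\ DomH u by move=> u /XO/OD.
have hHb : forall u, X u -> enorm (H u) <= enorm (H (x 0%N)) + LH * DX.
  move=> u Xu.
  have -> : H u = (H u - H (x 0%N)) + H (x 0%N) by rewrite subrK.
  apply: (le_trans (enorm_add _ _)); rewrite addrC lerD2l.
  apply: (le_trans (lipH _ _ (OX _ Xu).2 (OX _ (Xx 0%N)).2)).
  by apply: ler_wpM2l; [exact: ltW | exact: hD].
have hCH : forall u, X u -> enorm (H u) <= CH.
  move=> u Xu; apply: (@sup_ge_elt _ _ _ (enorm (H (x 0%N)) + LH * DX)).
    by exists u.
  by move=> _ [v Xv <-]; apply: hHb.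
have CH0 : 0 <= CH by apply: le_trans (hCH _ (Xx 0%N)); apply: enorm_ge0.
have hBH : forall u, Q u -> enorm (H u) <= BH.
  move=> u Qu; apply: (@sup_ge_elt _ _ _ (enorm (H (x 0%N)) + LH * DX)).
    by exists u.
  by move=> _ [v Qv <-]; apply: hHb; apply: QX.
have [q0 Qq0] := Q0.
have BH0 : 0 <= BH by apply: le_trans (hBH _ Qq0); apply: enorm_ge0.
have lamLF : forall j, lambda j * (LF + eta j * LH) <= 1.
  move=> j; case/andP: (lamb j) => _ hl.
  have h1 : lam_hi * (LF + eta0 * LH) <= 1.
    by move: lhi; rewrite ler_pdivlMr // addr_gt0 // mulr_gt0.
  apply: le_trans h1; apply: ler_pM.
  - exact: ltW.
  - by apply: addr_ge0; [exact: ltW | apply: mulr_ge0; apply: ltW].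
  - exact: hl.
  - by rewrite lerD2l; apply: ler_wpM2r; [exact: ltW | exact: eta_le0].
have step : forall xs j, X xs ->
  dotp (x j.+1 - xs) (x j.+1 - xs) <=
  (1 + alpha j) * dotp (x j - xs) (x j - xs) - alpha j * dotp (x j.-1 - xs) (x j.-1 - xs)
  + ineDelta x alpha j - 2 * lambda j * dotp (F (y j) + eta j *: H (y j)) (y j - xs).
  move=> xs j Xxs.
  have Lip : forall u v, Omega u -> Omega v ->
     enorm ((F u + eta j *: H u) - (F v + eta j *: H v)) <= (LF + eta j * LH) * enorm (u - v).
    move=> u v Ou Ov.
    have -> : (F u + eta j *: H u) - (F v + eta j *: H v) = (F u - F v) + eta j *: (H u - H v).
      by apply/rowP => i; rewrite !mxE; ring.
    apply: le_trans (enorm_add _ _) _; rewrite enorm_Z ger0_norm ?(ltW (eta_pos j)) // mulrDl.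
    apply: lerD; first exact: lipF (OD _ Ou).1 (OD _ Ov).1.
    rewrite -mulrA; apply: ler_wpM2l; [exact: ltW (eta_pos j) | exact: lipH (OD _ Ou).2 (OD _ Ov).2].
  have L0 : 0 <= LF + eta j * LH.
    by apply: addr_ge0; [exact: ltW | apply: mulr_ge0; apply: ltW].
  have := @eg_step R n X Omega PX POmega (fun v => F v + eta j *: H v) (LF + eta j * LH)
    (lambda j) (ineW x alpha j) xs (y j) (x j.+1) convX hPX convO hPO XO Lip L0 (lam0 j)
    (lamLF j) Xxs (ey j) (ex j).
  rewrite /ineW inertial_id /ineDelta enorm_sq; lra.
have del0 : forall j, 0 <= ineDelta x alpha j.
  move=> j; rewrite /ineDelta; apply: mulr_ge0; last by rewrite sqr_ge0.
  by apply: mulr_ge0; [exact: al0 | apply: addr_ge0 => //; exact: al0].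
have psum : forall k, \sum_(j < k) ineDelta x alpha j / eta j <= s.
  apply: psum_le_lim ser => j; apply: divr_ge0 => //; exact: ltW (eta_pos j).
have s0 : 0 <= s by have := psum 0%N; rewrite big_ord0.
have phiB : forall xs j, X xs -> 0 <= dotp (x j - xs) (x j - xs) <= DX ^+ 2.
  by move=> xs j Xxs; rewrite dotpp_ge0 hDsq.
have al01' : alpha 0%N <= 1 by case/andP: al01.
have hlo : forall j, lam_lo <= lambda j by move=> j; case/andP: (lamb j).
have two0 : (0 : R) < 2 by rewrite ltr0n.
have PQk : forall k, (0 : R) < k -> k `^ (1 - b) * k `^ b = k.
  move=> k k0; rewrite -powRD; last by rewrite (gt_eqF k0) implybT.
  by rewrite subrK powRr1 // ltW.
have c2le : (2 : R) `^ (1 - b) <= 2.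
  have h12 : (1 : R) <= 2 by rewrite ler1n.
  have hb1 : 1 - b <= 1 by rewrite gerBl ltW.
  by have := ler_powR h12 hb1; rewrite powRr1.
have keya : forall xs k, Q xs -> (1 <= k)%N ->
  dotp (H xs) (ybar lambda y k - xs) <=
    (k%:R `^ (1 - b))^-1 * (DX ^+ 2 / (2 `^ (1 - b) * lam_lo * eta0))
    + k%:R^-1 * (s / (2 * lam_lo)).
  move=> xs k Qxs k1; have Xxs := QX _ Qxs.
  have stepa : forall j, 2 * lambda j * dotp (H xs) (y j - xs) <=
     (eta j)^-1 * ((1 + alpha j) * dotp (x j - xs) (x j - xs)
        - alpha j * dotp (x j.-1 - xs) (x j.-1 - xs) - dotp (x j.+1 - xs) (x j.+1 - xs))
     + ineDelta x alpha j / eta j.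
    move=> j; have hs := step xs j Xxs.
    have m1 := monF _ _ (OX _ (Xy j)).1 (OX _ Xxs).1.
    have m2 := monH _ _ (OX _ (Xy j)).2 (OX _ Xxs).2.
    have m3 := Qxs.2 _ (Xy j).
    have e0 := eta_pos j; have l0 := lam0 j.
    move: hs m1 m2 m3.
    move: (dotp (x j.+1 - xs) (x j.+1 - xs)) (dotp (x j - xs) (x j - xs))
      (dotp (x j.-1 - xs) (x j.-1 - xs)) (ineDelta x alpha j) => p1 p2 p3 dd.
    dexp.
    move: (dotp (F (y j)) (y j)) (dotp (F (y j)) xs) (dotp (F xs) (y j)) (dotp (F xs) xs)
      (dotp (H (y j)) (y j)) (dotp (H (y j)) xs) (dotp (H xs) (y j)) (dotp (H xs) xs) => a1 a2 a3 a4 a5 a6 a7 a8.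
    move=> hs m1 m2 m3.
    have h4 : 0 <= lambda j * eta j * (a5 - a6 - (a7 - a8)).
      by apply: mulr_ge0; [apply: mulr_ge0; apply: ltW | lra].
    have h5 : 0 <= lambda j * (a1 - a2 - (a3 - a4)) by apply: mulr_ge0; [apply: ltW | lra].
    have h6 : 0 <= lambda j * (a3 - a4) by apply: mulr_ge0; [apply: ltW | lra].
    have h7 : 2 * lambda j * eta j * (a7 - a8) <= (1 + alpha j) * p2 - alpha j * p3 - p1 + dd.
      nra.
    have -> : 2 * lambda j * (a7 - a8) = (eta j)^-1 * (2 * lambda j * eta j * (a7 - a8)).
      by field; rewrite gt_eqF.
    rewrite [dd / eta j]mulrC -mulrDr; apply: ler_wpM2l => //; rewrite invr_ge0; exact: ltW.
  have sum1 : \sum_(j < k) 2 * lambda j * dotp (H xs) (y j - xs) <=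
      (eta k.-1)^-1 * DX ^+ 2 + s.
    apply: le_trans; first by apply: ler_sum => j _; exact: stepa.
    rewrite big_split /=; apply: lerD; last exact: psum.
    have := @telesc2 R (fun j => dotp (x j - xs) (x j - xs)) (fun j => (eta j)^-1) alpha
      (DX ^+ 2) k (fun j => phiB xs j Xxs) _ _ al0 al01' alrat.
    apply.
      by move=> j; rewrite invr_gt0.
    by move=> j; rewrite lef_pV2 ?posrE //; exact: etaS.
  rewrite (dot_ybar y lam0 (H xs) xs k1).
  have hsum : \sum_(j < k) lambda j * dotp (H xs) (y j - xs) =
      (\sum_(j < k) 2 * lambda j * dotp (H xs) (y j - xs)) / 2.
    by rewrite mulr_suml; apply: eq_bigr => j _; field.
  rewrite hsum.
  have kpos : 0 < (k%:R : R) by rewrite ltr0n.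
  have eKm1 : (eta k.-1)^-1 = k%:R `^ b / eta0 by rewrite eta_e /pw prednK // invf_div.
  rewrite eKm1 in sum1.
  apply: (le_trans _ (@final_a R k%:R (k%:R `^ (1-b)) (k%:R `^ b) (2 `^ (1-b)) (Lam lambda k)
     lam_lo eta0 (DX ^+ 2) s kpos (powR_gt0 _ kpos) (powR_gt0 _ kpos) (PQk _ kpos)
     (powR_gt0 _ two0) c2le lo0 (Lam_ge k hlo) eta0p (sqr_ge0 DX) s0)).
  apply: ler_wpM2l; first by rewrite invr_ge0 Lam_ge0.
  apply: ler_wpM2r; first by rewrite invr_ge0.
  exact: sum1.
have keyb : forall xs k, X xs -> (1 <= k)%N ->
  dotp (F xs) (ybar lambda y k - xs) <= Fbound k.
  move=> xs k Xxs k1.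
  have stepb : forall j, 2 * lambda j * dotp (F xs) (y j - xs) <=
     1 * ((1 + alpha j) * dotp (x j - xs) (x j - xs)
        - alpha j * dotp (x j.-1 - xs) (x j.-1 - xs) - dotp (x j.+1 - xs) (x j.+1 - xs))
     + ineDelta x alpha j + 2 * (lam_hi * CH * DX) * eta j.
    move=> j; have hs := step xs j Xxs.
    have m1 := monF _ _ (OX _ (Xy j)).1 (OX _ Xxs).1.
    have hc : - dotp (H (y j)) (y j - xs) <= CH * DX.
      have hab := abs_dotp (H (y j)) (y j - xs).
      have hp : enorm (H (y j)) * enorm (y j - xs) <= CH * DX.
        by apply: ler_pM; rewrite ?enorm_ge0 ?hCH ?hD.
      have hn : - dotp (H (y j)) (y j - xs) <= `|dotp (H (y j)) (y j - xs)|.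
        by rewrite -normrN ler_norm.
      lra.
    have e0 := eta_pos j; have l0 := lam0 j.
    have lh := (andP (lamb j)).2.
    move: hs m1 hc.
    move: (dotp (x j.+1 - xs) (x j.+1 - xs)) (dotp (x j - xs) (x j - xs))
      (dotp (x j.-1 - xs) (x j.-1 - xs)) (ineDelta x alpha j) => p1 p2 p3 dd.
    rewrite !(dotpDl, dotpNl, dotpZl).
    move: (dotp (F (y j)) (y j - xs)) (dotp (F xs) (y j - xs)) (dotp (H (y j)) (y j - xs)) => f1 f0 c.
    move=> hs m1 hc.
    have h3 : 0 <= lambda j * eta j * (CH * DX + c).
      by apply: mulr_ge0; [apply: mulr_ge0; apply: ltW | lra].
    have h4 : 0 <= (lam_hi - lambda j) * eta j * (CH * DX).
      by apply: mulr_ge0; [apply: mulr_ge0; [lra | apply: ltW] | apply: mulr_ge0].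
    have h5 : 0 <= lambda j * (f1 - f0) by apply: mulr_ge0; [apply: ltW | lra].
    nra.
  have sumE : \sum_(j < k) 1 * ((1 + alpha j) * dotp (x j - xs) (x j - xs)
        - alpha j * dotp (x j.-1 - xs) (x j.-1 - xs) - dotp (x j.+1 - xs) (x j.+1 - xs))
      <= 1 * DX ^+ 2.
    have := @telesc2 R (fun j => dotp (x j - xs) (x j - xs)) (fun _ => 1) alpha
      (DX ^+ 2) k (fun j => phiB xs j Xxs) _ _ al0 al01' _.
    apply.
    - by move=> j; rewrite ltr01.
    - by move=> j.
    - by move=> j; rewrite !mulr1.
  have sumD : \sum_(j < k) ineDelta x alpha j <= s.
    apply: le_trans (psum k); apply: ler_sum => j _.
    rewrite ler_pdivlMr //; apply: ler_piMr => //.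
  have sumEta : \sum_(j < k) 2 * (lam_hi * CH * DX) * eta j <=
      2 * (lam_hi * CH * DX) * (eta0 * (k%:R `^ (1 - b)) / (1 - b)).
    rewrite -mulr_sumr; apply: ler_wpM2l.
      by apply: mulr_ge0 => //; apply: mulr_ge0 => //; apply: mulr_ge0 => //; exact: le_trans (ltW lo0) lolh.
    have -> : \sum_(j < k) eta j = eta0 * \sum_(j < k) (pw j)^-1.
      by rewrite mulr_sumr; apply: eq_bigr => j _; rewrite eta_e.
    rewrite -mulrA; apply: ler_wpM2l; first exact: ltW.
    by apply: sum_pow_bound; rewrite b0 b1.
  have sum2 : \sum_(j < k) 2 * lambda j * dotp (F xs) (y j - xs) <=
      DX ^+ 2 + s + 2 * (lam_hi * CH * DX) * (eta0 * (k%:R `^ (1 - b)) / (1 - b)).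
    apply: le_trans; first by apply: ler_sum => j _; exact: stepb.
    rewrite !big_split /= -[DX ^+ 2]mul1r.
    by apply: lerD; [apply: lerD|].
  rewrite (dot_ybar y lam0 (F xs) xs k1).
  have hsum : \sum_(j < k) lambda j * dotp (F xs) (y j - xs) =
      (\sum_(j < k) 2 * lambda j * dotp (F xs) (y j - xs)) / 2.
    by rewrite mulr_suml; apply: eq_bigr => j _; field.
  rewrite hsum.
  have kpos : 0 < (k%:R : R) by rewrite ltr0n.
  have W0 : 0 <= lam_hi * CH * DX.
    by apply: mulr_ge0 => //; apply: mulr_ge0 => //; exact: le_trans (ltW lo0) lolh.
  rewrite /Fbound.
  have -> : eta0 * lam_hi * CH * DX = eta0 * (lam_hi * CH * DX) by rewrite !mulrA.
  apply: (le_trans _ (@final_b R k%:R (k%:R `^ (1-b)) (k%:R `^ b) (Lam lambda k)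
     lam_lo b eta0 (DX ^+ 2) s (lam_hi * CH * DX) kpos (powR_gt0 _ kpos) (powR_gt0 _ kpos)
     (PQk _ kpos) b1 lo0 (Lam_ge k hlo) (sqr_ge0 DX) s0 W0 (ltW eta0p))).
  apply: ler_wpM2l; first by rewrite invr_ge0 Lam_ge0.
  apply: ler_wpM2r; first by rewrite invr_ge0.
  exact: sum2.
have Xyb : forall k, (1 <= k)%N -> X (ybar lambda y k).
  move=> k k1; exact: (ybar_in lam0 convX Xy k1).
have gapH_ub : forall k, (1 <= k)%N ->
  Gap (ybar lambda y k) H Q <=
    (k%:R `^ (1 - b))^-1 * (DX ^+ 2 / (2 `^ (1 - b) * lam_lo * eta0))
    + k%:R^-1 * (s / (2 * lam_lo)).
  move=> k k1; apply: sup_le_B.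
    by exists (dotp (H q0) (ybar lambda y k - q0)); exists q0.
  by move=> _ [q Qq <-]; apply: keya.
have gapH_lb : forall k, (1 <= k)%N ->
  - BH * distS (ybar lambda y k) Q <= Gap (ybar lambda y k) H Q.
  move=> k k1; set z := ybar lambda y k.
  apply/ler_addgt0Pr => e e0.
  have hinf : has_inf [set enorm (z - q) | q in Q].
    split; first by exists (enorm (z - q0)); exists q0.
    by exists 0 => _ [q _ <-]; exact: enorm_ge0.
  have BH1 : 0 < BH + 1 by rewrite ltr_wpDl.
  set eps := e / (BH + 1).
  have eps0 : 0 < eps by rewrite divr_gt0.
  have [d [q Qq <-] hd] := inf_adherent eps0 hinf.
  have hg : dotp (H q) (z - q) <= Gap z H Q.
    apply: (sup_ge_elt (B := (k%:R `^ (1 - b))^-1 * (DX ^+ 2 / (2 `^ (1 - b) * lam_lo * eta0))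
       + k%:R^-1 * (s / (2 * lam_lo)))); first by exists q.
    by move=> _ [q' Qq' <-]; apply: keya.
  have hab := abs_dotp (H q) (z - q); have hb := hBH q Qq.
  have hn : - `|dotp (H q) (z - q)| <= dotp (H q) (z - q).
    by rewrite lerNl -normrN ler_norm.
  rewrite /distS -/z in hd *.
  set dist := inf _ in hd *.
  have h1 : 0 <= BH * (dist - (enorm (z - q) - eps)) by apply: mulr_ge0 => //; lra.
  have h2 : enorm (H q) * enorm (z - q) <= BH * enorm (z - q).
    by apply: ler_wpM2r => //; exact: enorm_ge0.
  have h3 : BH * eps <= e.
    rewrite /eps mulrA ler_pdivrMr //; lra.
  lra.
split.
  by move=> k k1; split; [exact: gapH_lb | exact: gapH_ub].
have gapF_ub : forall k, (1 <= k)%N -> Gap (ybar lambda y k) F X <= Fbound k.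
  move=> k k1; apply: sup_le_B.
    by exists (dotp (F (x 0%N)) (ybar lambda y k - x 0%N)); exists (x 0%N).
  by move=> _ [q Xq <-]; apply: keyb.
have gapF_lb : forall k, (1 <= k)%N ->
    dotp (F q0) (ybar lambda y k - q0) <= Gap (ybar lambda y k) F X.
  move=> k k1; apply: (sup_ge_elt (B := Fbound k)); first by exists q0 => //; exact: QX.
  by move=> _ [q Xq <-]; apply: keyb.
split.
  move=> k k1; split; last exact: gapF_ub.
  apply: le_trans (gapF_lb k k1); exact: Qq0.2 _ (Xyb k k1).
move=> sigma M sig0 M1 ws k k1.
set z := ybar lambda y k.
have d0 : 0 <= distS z Q.
  apply: inf_ge_B; first by exists (enorm (z - q0)); exists q0.
  by move=> _ [q _ <-]; exact: enorm_ge0.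
have hw := ws q0 z Qq0 (Xyb k k1).
have hF : dotp (F q0) (z - q0) <= Fbound k := keyb q0 k (QX _ Qq0) k1.
have pM0 := powR_ge0 (distS z Q) M.
have Fb0 : 0 <= Fbound k.
  apply: le_trans hF; apply: le_trans hw; apply: mulr_ge0 => //; exact: ltW.
have hdm : distS z Q `^ M <= Fbound k / sigma.
  rewrite ler_pdivlMr // mulrC; exact: le_trans hw hF.
have M0 : 0 < M by apply: lt_le_trans M1.
have r0 : 0 <= 1 / M by rewrite divr_ge0 // ltW.
have hdist : distS z Q <= (Fbound k / sigma) `^ (1 / M).
  have -> : distS z Q = (distS z Q `^ M) `^ (1 / M).
    by rewrite -powRrM mul1r mulfV ?gt_eqF // powRr1.
  apply: ge0_ler_powR => //; rewrite nnegrE //; apply: divr_ge0 => //; exact: ltW.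
have hs : (sigma^-1) `^ (1 / M) * sigma `^ (1 / M) = 1.
  by rewrite -powRM ?invr_ge0 ?ltW // mulVf ?gt_eqF // powR1.
have sr0 : 0 < sigma `^ (1 / M) by rewrite powR_gt0.
have hsv : (sigma^-1) `^ (1 / M) = (sigma `^ (1 / M))^-1.
  move: sr0 hs; move: (sigma `^ (1 / M)) (sigma^-1 `^ (1 / M)) => u t u0 ht.
  by rewrite -[t]mulr1 -(mulfV (lt0r_neq0 u0)) mulrA ht mul1r.
have eq1 : (Fbound k / sigma) `^ (1 / M) = Fbound k `^ (1 / M) / sigma `^ (1 / M).
  by rewrite powRM // ?invr_ge0 ?ltW // hsv.
rewrite eq1 in hdist.
have hl := gapH_lb k k1; rewrite -/z in hl.
have h1 : BH * distS z Q <= BH * (Fbound k `^ (1 / M) / sigma `^ (1 / M)).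
  by apply: ler_wpM2l.
have -> : - (BH / sigma `^ (1 / M)) * Fbound k `^ (1 / M) =
   - (BH * (Fbound k `^ (1 / M) / sigma `^ (1 / M))) by ring.
lra.
Qed.
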